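(* Let $X_1,X_2,\dots$ be i.i.d. exponential random variables with mean $1$ and $\lambda_1,\lambda_2,\dots$ positive reals. Then for any $t\ge0$ and integers $k>m\ge0$, $$\mathbb{P}\Big(\sum_{i=1}^kX_i/\lambda_i\le t,\ \sum_{i=1}^mX_i/\lambda_i+\sum_{i=k+1}^{2k-m}X_i/\lambda_i\le t\Big)\le\frac{(et)^{2k-m}}{(k-m)^{2k-2m}m^m}\prod_{i=1}^{2k-m}\lambda_i.$$
   Context: The convention $0^0=1$ is used when $m=0$. *)

(* Defs.v *)
From HB Require Import structures.
From mathcomp Require Import all_boot all_order all_algebra.
From mathcomp Require Import all_classical all_reals all_analysis.
Set Implicit Arguments. Unset Strict Implicit. Unset Printing Implicit Defensive.
Import Order.TTheory GRing.Theory Num.Theory.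
Local Open Scope classical_set_scope.
Local Open Scope ring_scope.

Definition mutually_independent {d} {T : measurableType d} {R : realType}
  (P : probability T R) (X : nat -> {RV P >-> R}) : Prop :=
  forall (s : seq nat) (B : nat -> set R),
    uniq s -> (forall i, measurable (B i)) ->
    P (\bigcap_(i in [set j | j \in s]) (X i @^-1` B i)) =
    (\prod_(i <- s) P (X i @^-1` B i))%E.

Definition exp_mean1 {d} {T : measurableType d} {R : realType}
  (P : probability T R) (X : {RV P >-> R}) : Prop :=
  forall A : set R, measurable A -> distribution P X A = exponential_prob 1 A.
Arguments mutually_independent {d T R} P X.
Arguments exp_mean1 {d T R} P X.

(* Main.v *)
Require Import Defs.
From HB Require Import structures.
From mathcomp Require Import all_boot all_order all_algebra.
From mathcomp Require Import all_classical all_reals all_analysis.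
Import Order.TTheory GRing.Theory Num.Theory.
Local Open Scope classical_set_scope.
Local Open Scope ring_scope.
From mathcomp Require Import ring lra.
Import numFieldTopology.Exports.

Lemma expo_itv (R : realType) (x y : R) : 0 <= x -> x < y ->
  exponential_prob 1 `[x, y]%classic = (expR (-x) - expR (-y))%:E.
Proof.
move=> x0 xy.
have cexpNM : continuous (fun z : R^o => expR (- 1 * z)).
  move=> z; apply: continuous_comp; last exact: continuous_expR.
  by apply: continuousM => //; apply: (@continuousN _ R^o); exact: cst_continuous.
rewrite /exponential_prob.
rewrite (@continuous_FTC2 _ _ (fun z => - expR (- 1 * z))) //.
- by rewrite !mulN1r /= opprK -EFinD addrC.
- apply: (@continuous_subspaceW R^o _ _ [set` `[0, +oo[%R]).
  + move=> z /=; rewrite !in_itv /= => /andP[h _]; by rewrite (le_trans x0 h).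
  + exact: within_continuous_exponential_pdf.
- split.
  + by move=> z _; exact: ex_derive.
  + by apply/cvg_at_right_filter; apply: cvgN; exact: cexpNM.
  + by apply/cvg_at_left_filter; apply: cvgN; exact: cexpNM.
- move=> z; rewrite in_itv/= => /andP[z0 _].
  by apply: derive1_exponential_pdf; rewrite in_itv/= andbT (le_lt_trans x0 z0).
Qed.

Lemma expo_neg (R : realType) : exponential_prob (1:R) `]-oo, 0[%classic = 0%E.
Proof.
rewrite /exponential_prob integral0_eq // => z /=; rewrite in_itv /= => z0.
by rewrite lt0_exponential_pdf.
Qed.

Lemma distrE d (T : measurableType d) (R : realType) (P : probability T R) (Y : {RV P >-> R}) A :
  distribution P Y A = P (Y @^-1` A).
Proof. by []. Qed.
Lemma geo_bound (R : realType) (a δ : R) (N : nat) : 0 < a -> 0 < δ -> δ <= a/(1+a) ->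
 \sum_(x < N) (expR (-(x%:R*δ*a)) - expR (-(x.+1%:R*δ*a))) * expR (-(x%:R*δ)) <= a.
Proof.
move=> a0 d0 hd.
have -> : \sum_(x < N) (expR (-(x%:R*δ*a)) - expR (-(x.+1%:R*δ*a))) * expR (-(x%:R*δ))
   = (1 - expR (-(δ * a))) * \sum_(x < N) (expR (-(δ * (1 + a)))) ^+ x.
  rewrite mulr_sumr; apply: eq_bigr => x _.
  rewrite -expRM_natl !mulrBl mul1r -!expRD -natr1.
  have e1 : forall y : R, -(y * δ * a) - y * δ = y * - (δ * (1 + a)) by move=> y; ring.
  have e2 : forall y : R, -((y + 1) * δ * a) - y * δ = - (δ * a) + y * - (δ * (1 + a)) by move=> y; ring.
  by rewrite e1 e2.
have a1 : 0 < 1 + a by lra.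
set q := expR (-(δ * (1 + a))).
set c := 1 - expR (-(δ * a)).
have q1 : q < 1 by rewrite /q expR_lt1 oppr_lt0 mulr_gt0.
have q0 : 0 <= q by exact: expR_ge0.
have qpos : 0 < 1 - q by rewrite subr_gt0.
have hs : \sum_(x < N) q ^+ x <= (1 - q)^-1.
  have h1 : (1 - q) * \sum_(x < N) q ^+ x = 1 - q ^+ N.
    by rewrite -opprB mulNr -subrX1 opprB.
  rewrite -(@ler_pM2l _ (1 - q)) ?subr_gt0 // h1 divff ?gt_eqF //.
  by rewrite gerBl exprn_ge0.
have hc : c <= δ * a.
  have := expR_ge1Dx (- (δ * a)); rewrite /c; lra.
have ppos : 0 < δ * (1 + a) by rewrite mulr_gt0.
have hq : δ <= 1 - q.
  have e1 : 1 + δ * (1 + a) <= expR (δ * (1 + a)) by exact: expR_ge1Dx.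
  have hq' : q <= (1 + δ * (1 + a))^-1.
    rewrite /q expRN lef_pV2 ?posrE ?expR_gt0 //; lra.
  have hd' : δ * (1 + δ * (1 + a)) <= δ * (1 + a).
    rewrite ler_pM2l //.
    have : δ * (1 + a) <= a by rewrite -ler_pdivlMr  // mulrC.
    lra.
  have p1 : 1 + δ * (1 + a) != 0 by rewrite gt_eqF //; lra.
  have : δ <= 1 - (1 + δ * (1 + a))^-1.
    have -> : 1 - (1 + δ * (1 + a))^-1 = δ * (1 + a) / (1 + δ * (1 + a)) by field.
    rewrite ler_pdivlMr //; lra.
  lra.
have c0 : 0 <= c by rewrite /c subr_ge0 expR_le1 oppr_le0 mulr_ge0 // ltW.
apply: (le_trans (ler_wpM2l c0 hs)).
rewrite ler_pdivrMr //.
apply: (le_trans hc); rewrite [a * _]mulrC ler_pM2r //.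
Qed.

Lemma real_part (R : realType) (n N : nat) (a : 'I_n -> R) (δ T0 : R) :
 (forall i, 0 < a i) -> 0 < δ -> (forall i, δ <= a i / (1 + a i)) ->
 \sum_(j : {ffun 'I_n -> 'I_N} | \sum_(i < n) (j i)%:R * δ <= T0)
   \prod_(i < n) (expR (-((j i)%:R*δ*a i)) - expR (-((j i).+1%:R*δ*a i)))
 <= expR T0 * \prod_(i < n) a i.
Proof.
move=> a0 d0 hd.
pose F (i : 'I_n) (x : 'I_N) := expR (-(x%:R*δ*a i)) - expR (-(x.+1%:R*δ*a i)).
have F0 : forall i x, 0 <= F i x.
  move=> i x; rewrite /F subr_ge0 ler_expR lerN2 ler_pM2r // ler_pM2r //.
  by rewrite ler_nat.
pose G (i : 'I_n) (x : 'I_N) := F i x * expR (-(x%:R * δ)).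
have G0 : forall i x, 0 <= G i x by move=> i x; rewrite mulr_ge0 // expR_ge0.
apply: (le_trans (y := \sum_(j : {ffun 'I_n -> 'I_N} | \sum_(i < n) (j i)%:R * δ <= T0)
   expR T0 * \prod_(i < n) G i (j i))).
  apply: ler_sum => j hj.
  rewrite /G big_split /= mulrA -expR_sum mulrAC -expRD sumrN.
  rewrite -[X in X <= _]mul1r ler_wpM2r //.
    by apply: prodr_ge0 => i _; exact: F0.
  by apply: le_trans (expR_ge1Dx _); rewrite lerDl subr_ge0.
apply: (le_trans (y := \sum_(j : {ffun 'I_n -> 'I_N}) expR T0 * \prod_(i < n) G i (j i))).
  rewrite [X in _ <= X](bigID (fun j : {ffun 'I_n -> 'I_N} => \sum_(i < n) (j i)%:R * δ <= T0)) /=.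
  by rewrite lerDl sumr_ge0 // => j _; rewrite mulr_ge0 ?expR_ge0 ?prodr_ge0.
rewrite -mulr_sumr ler_wpM2l ?expR_ge0 //.
rewrite -(bigA_distr_bigA G).
apply: ler_prod => i _; rewrite sumr_ge0 //=.
exact: geo_bound.
Qed.

Lemma in_bigU (T : Type) (I : eqType) (r : seq I) (Q : pred I) (A : I -> set T) i w :
  i \in r -> Q i -> A i w -> (\big[setU/set0]_(j <- r | Q j) A j) w.
Proof.
elim: r => [|h r IH] //=; rewrite in_cons big_cons => /orP[/eqP<-|ir] Qi Aiw.
  by rewrite Qi; left.
by case: (Q h); [right|]; exact: IH.
Qed.

Section Core.
Context d (T : measurableType d) (R : realType) (P : probability T R) (X : nat -> {RV P >-> R}).
Hypothesis hind : mutually_independent P X.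
Hypothesis hexp : forall i, exp_mean1 P (X i).

Lemma PX_itv i (x y : R) : 0 <= x -> x < y ->
  P (X i @^-1` `[x, y]%classic) = (expR (-x) - expR (-y))%:E.
Proof. by move=> x0 xy; rewrite -distrE hexp // expo_itv. Qed.

Lemma PX_neg i : P (X i @^-1` `]-oo, 0[%classic) = 0%E.
Proof. by rewrite -distrE hexp // expo_neg. Qed.

Lemma mbigU (I : Type) (r : seq I) (Q : pred I) (A : I -> set T) :
  (forall i, measurable (A i)) -> measurable (\big[setU/set0]_(i <- r | Q i) A i).
Proof.
move=> mA; apply: (big_ind (fun S => measurable S)) => //.
by move=> ? ? ? ?; exact: measurableU.
Qed.

Lemma measure_bigU (I : Type) (r : seq I) (Q : pred I) (A : I -> set T) :
  (forall i, measurable (A i)) ->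
  (P (\big[setU/set0]_(i <- r | Q i) A i) <= \sum_(i <- r | Q i) P (A i))%E.
Proof.
move=> mA; elim: r => [|h r IH]; first by rewrite !big_nil measure0.
rewrite !big_cons; case: (Q h) => //.
apply: le_trans (measureU2 _ _ _) _ => //; first exact: mbigU.
exact: leeD.
Qed.


Lemma core n (a : nat -> R) (T0 : R) (E : set T) :
  (forall i, 0 < a i) -> 0 <= T0 -> measurable E ->
  (forall w, E w -> (forall i, (i < n)%N -> 0 <= X i w) ->
     \sum_(0 <= i < n) X i w / a i <= T0) ->
  (P E <= (expR T0 * \prod_(0 <= i < n) a i)%:E)%E.
Proof.
move=> a0 T00 mE hE.
pose δ := \prod_(0 <= i < n) (a i / (1 + a i)).
have a1 : forall i, 0 < 1 + a i by move=> i; rewrite addr_gt0.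
have δ0 : 0 < δ by apply: prodr_gt0 => i _; rewrite divr_gt0.
have hδ : forall i, (i < n)%N -> δ <= a i / (1 + a i).
  move=> i hi; rewrite /δ (bigD1_seq i) ?mem_index_iota ?iota_uniq //=.
  rewrite -[X in _ <= X]mulr1 ler_wpM2l //; first by rewrite divr_ge0 // ltW.
  apply: prodr_ile1 => j _; rewrite divr_ge0 ?ltW //=.
  by rewrite ltr_pdivrMr // mul1r ltrDr.
pose N := (Num.Def.trunc (T0 / δ)).+1.
pose g (j : {ffun 'I_n -> 'I_N}) (i : nat) : nat :=
  if insub i is Some o then val (j o) else 0%N.
pose B j i := `[(g j i)%:R * δ * a i, (g j i).+1%:R * δ * a i]%classic.
pose Cell j := \bigcap_(i in [set i | i \in index_iota 0 n]) (X i @^-1` B j i).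
pose Neg i := X i @^-1` `]-oo, 0[%classic.
pose Jp := fun j : {ffun 'I_n -> 'I_N} => \sum_(i < n) (j i)%:R * δ <= T0.
have mCell : forall j, measurable (Cell j).
  move=> j; apply: bigcap_measurableType => i _.
  by apply: measurable_funPTI; exact: measurable_itv.
have mNeg : forall i, measurable (Neg i).
  by move=> i; apply: measurable_funPTI; exact: measurable_itv.
have cover : E `<=` (\big[setU/set0]_(i <- index_iota 0 n) Neg i) `|`
                    \big[setU/set0]_(j | Jp j) Cell j.
  move=> w Ew.
  case: (boolP [exists i : 'I_n, X i w < 0]).
    move=> /existsP [i hi]; left; apply: (@in_bigU _ _ _ _ _ (val i)) => //.
      by rewrite mem_index_iota /=.
  rewrite negb_exists => /forallP hall.
  have pos : forall i, (i < n)%N -> 0 <= X i w.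
    by move=> i hi; have := hall (Ordinal hi); rewrite -leNgt.
  have hs := hE w Ew pos.
  have hy : forall i : 'I_n, X i w / a i <= T0.
    move=> i; apply: le_trans hs; rewrite big_mkord (bigD1 i) //= lerDl.
    by apply: sumr_ge0 => k _; rewrite divr_ge0 ?pos // ltW.
  pose y (i : 'I_n) := X i w / (δ * a i).
  have yE : forall i, y i = X i w / a i / δ.
    by move=> i; rewrite /y [δ * _]mulrC invfM mulrA.
  have y0 : forall i, 0 <= y i.
    by move=> i; rewrite /y divr_ge0 ?pos // mulr_ge0 // ltW.
  have htr : forall i : 'I_n, (Num.Def.trunc (y i) < N)%N.
    move=> i; rewrite ltnS; apply: le_truncn.
    by rewrite yE ler_pM2r ?invr_gt0.
  pose j := [ffun i => Ordinal (htr i)] : {ffun 'I_n -> 'I_N}.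
  right; apply: (@in_bigU _ _ _ _ _ j) => //.
    exact: mem_index_enum.
  - rewrite /Jp; apply: le_trans hs; rewrite big_mkord; apply: ler_sum => i _.
    rewrite ffunE /= -ler_pdivlMr // -yE.
    by have /andP[] := truncn_itv (y0 i).
  - move=> i /= hi.
    have hi' : (i < n)%N by move: hi; rewrite mem_index_iota.
    change i with (val (Ordinal hi')).
    rewrite /B /g valK ffunE /= in_itv /=.
    have da : 0 < δ * a (Ordinal hi') by rewrite mulr_gt0.
    have := truncn_itv (y0 (Ordinal hi')) => /andP[h1 h2].
    rewrite -!mulrA; apply/andP; split.
      by rewrite -ler_pdivlMr //; exact: h1.
    by rewrite -ler_pdivrMr //; exact: ltW h2.
have step : (P E <= \sum_(i <- index_iota 0 n) P (Neg i) + \sum_(j | Jp j) P (Cell j))%E.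
  apply: le_trans (le_measure _ _ _ cover) _.
  - by rewrite inE.
  - by rewrite inE; apply: measurableU; exact: mbigU.
  apply: le_trans (measureU2 _ _ _) _; try exact: mbigU.
  by apply: leeD; exact: measure_bigU.
apply: le_trans step _.
rewrite big1 ?add0e; last by move=> i _; exact: PX_neg.
have hC : forall j, P (Cell j) =
  (\prod_(i < n) (expR (-((j i)%:R*δ*a i)) - expR (-((j i).+1%:R*δ*a i))))%:E.
  move=> j; rewrite /Cell hind; last 2 first.
  - exact: iota_uniq.
  - by move=> i; exact: measurable_itv.
  rewrite (eq_bigr (fun i => (expR (- ((g j i)%:R * δ * a i)) - expR (-((g j i).+1%:R*δ*a i)))%:E)); last first.
    move=> i _; rewrite PX_itv //.
      by rewrite mulr_ge0 // ?mulr_ge0 // ltW.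
    by rewrite ltr_pM2r // ltr_pM2r // ltr_nat.
  rewrite prodEFin big_mkord; congr EFin; apply: eq_bigr => i _.
  by rewrite /g valK.
rewrite (eq_bigr _ (fun j _ => hC j)) sumEFin lee_fin big_mkord.
apply: real_part => // i; exact: hδ.
Qed.

End Core.

Lemma pre_meas d (T : measurableType d) (R : realType) (f : T -> R) (t : R) :
  measurable_fun setT f -> measurable [set w | f w <= t].
Proof.
move=> mf; have := mf measurableT `]-oo, t]%classic (measurable_itv _); rewrite setTI.
congr measurable; apply/seteqP; split => w /=; by rewrite in_itv /=.
Qed.

Lemma meas_sum d (T : measurableType d) (R : realType) (P : probability T R)
  (X : nat -> {RV P >-> R}) (lam : nat -> R) (lo hi : nat) :
  measurable_fun setT (fun w => \sum_(lo <= i < hi) X i w / lam i).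
Proof.
apply: measurable_sum => i.
by apply: measurable_realfun.measurable_funM => //; exact: measurable_cst.
Qed.

From mathcomp Require Import zify.

Lemma main_pos (d : measure_display) (T : measurableType d) (R : realType)
  (P : probability T R) (X : nat -> {RV P >-> R}) (lam : nat -> R)
  (hind : mutually_independent P X)
  (hexp : forall i, exp_mean1 P (X i))
  (hlam : forall i, 0 < lam i)
  (t : R) (ht : 0 < t) (k m : nat) (hmk : (m < k)%N) :
  (P [set w | (\sum_(0 <= i < k) X i w / lam i <= t)%R /\
              (\sum_(0 <= i < m) X i w / lam i
               + \sum_(k <= i < 2 * k - m) X i w / lam i <= t)%R]
   <= ((expR 1 * t) ^+ (2 * k - m)
       / ((k - m)%:R ^+ (2 * k - 2 * m) * m%:R ^+ m)
       * \prod_(0 <= i < 2 * k - m) lam i)%:E)%E.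
Proof.
set n := (2 * k - m)%N.
set b := (k - m)%N.
have hnb : (2 * k - 2 * m = n - m)%N by rewrite /n; lia.
have b0 : 0 < b%:R :> R by rewrite ltr0n /b; lia.
pose a i := if (i < m)%N then lam i * t / m%:R else lam i * t / b%:R.
have a0 : forall i, 0 < a i.
  move=> i; rewrite /a; case: ifP => hi.
    by rewrite divr_gt0 ?mulr_gt0 // ltr0n; lia.
  by rewrite divr_gt0 ?mulr_gt0.
set E := [set w | _ /\ _].
have mE : measurable E.
  apply: measurableI; apply: pre_meas; first exact: meas_sum.
  by apply: measurable_realfun.measurable_funD; exact: meas_sum.
have himp : forall w, E w -> (forall i, (i < n)%N -> 0 <= X i w) ->
     \sum_(0 <= i < n) X i w / a i <= n%:R.
  move=> w [h1 h2] pos.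
  have f0 : forall i, (i < n)%N -> 0 <= X i w / lam i.
    by move=> i hi; rewrite divr_ge0 ?pos // ltW.
  have hmk' : (m <= k)%N by exact: ltnW.
  have hkn : (k <= n)%N by rewrite /n; lia.
  have hmn0 : (m <= n)%N by rewrite /n; lia.
  set A := \sum_(0 <= i < m) X i w / lam i in h1 h2 *.
  set Cs := \sum_(k <= i < n) X i w / lam i in h2 *.
  rewrite (big_cat_nat (n := m)) //= in h1.
  set Bs := \sum_(m <= i < k) X i w / lam i in h1 *.
  rewrite -/A in h1.
  have A0 : 0 <= A.
    rewrite /A big_nat_cond; apply: sumr_ge0 => i /andP[/andP[_ hi] _]; apply: f0; lia.
  have B0 : 0 <= Bs.
    rewrite /Bs big_nat_cond; apply: sumr_ge0 => i /andP[/andP[_ hi] _]; apply: f0; lia.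
  have C0 : 0 <= Cs.
    rewrite /Cs big_nat_cond; apply: sumr_ge0 => i /andP[/andP[_ hi] _]; apply: f0; lia.
  rewrite (big_cat_nat (n := m)) //=.
  rewrite (big_cat_nat (n := k) (m := m) (p := n)) //.
  have t0 : t != 0 by rewrite gt_eqF.
  have -> : \sum_(0 <= i < m) X i w / a i = m%:R / t * A.
    rewrite /A mulr_sumr; apply: eq_big_nat => i /andP[_ hi]; rewrite /a hi.
    have m0 : m%:R != 0 :> R by rewrite pnatr_eq0; lia.
    have l0 : lam i != 0 by rewrite gt_eqF.
    by field; rewrite m0 l0 t0.
  have -> : \sum_(m <= i < k) X i w / a i = b%:R / t * Bs.
    rewrite /Bs mulr_sumr; apply: eq_big_nat => i /andP[hi _]; rewrite /a ltnNge hi /=.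
    have m0 : b%:R != 0 :> R by rewrite gt_eqF.
    have l0 : lam i != 0 by rewrite gt_eqF.
    by field; rewrite m0 l0 t0.
  have -> : \sum_(k <= i < n) X i w / a i = b%:R / t * Cs.
    rewrite /Cs mulr_sumr; apply: eq_big_nat => i /andP[hi _].
    rewrite /a ifF; last by apply/negbTE; rewrite -leqNgt; lia.
    have m0 : b%:R != 0 :> R by rewrite gt_eqF.
    have l0 : lam i != 0 by rewrite gt_eqF.
    by field; rewrite m0 l0 t0.
  have key : forall (c x : R), 0 <= c -> x <= t -> c / t * x <= c.
    move=> c x c0 xt; rewrite mulrAC ler_pdivrMr // ler_wpM2l //.
  have -> : n%:R = m%:R + (b%:R + b%:R) :> R by rewrite -!natrD /n /b; congr _%:R; lia.
  apply: lerD; first by apply: key => //; lra.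
  by apply: lerD; apply: key => //; lra.
apply: le_trans (@core _ _ _ _ _ hind hexp n a n%:R E a0 (ler0n _ n) mE himp) _.
rewrite lee_fin.
have hmn : (m <= n)%N by rewrite /n; lia.
rewrite (big_cat_nat (n := m) (F := a)) //= (big_cat_nat (n := m) (F := lam)) //=.
have -> : \prod_(0 <= i < m) a i = \prod_(0 <= i < m) (lam i * (t / m%:R)).
  by apply: eq_big_nat => i /andP[_ hi]; rewrite /a hi mulrA.
have -> : \prod_(m <= i < n) a i = \prod_(m <= i < n) (lam i * (t / b%:R)).
  by apply: eq_big_nat => i /andP[hi _]; rewrite /a ltnNge hi /= mulrA.
rewrite !big_split /= !prodr_const_nat subn0.
rewrite hnb -[in expR _](mulr1 n%:R) expRM_natl exprMn.
have tn : t ^+ n = t ^+ m * t ^+ (n - m) by rewrite -exprD subnKC.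
rewrite tn !exprVn.
rewrite le_eqVlt; apply/orP; left; apply/eqP; rewrite invfM; ring.
Qed.

Theorem lemma2p2 (d : measure_display) (T : measurableType d) (R : realType)
  (P : probability T R) (X : nat -> {RV P >-> R}) (lam : nat -> R)
  (hind : mutually_independent P X)
  (hexp : forall i, exp_mean1 P (X i))
  (hlam : forall i, 0 < lam i)
  (t : R) (ht : 0 <= t) (k m : nat) (hmk : (m < k)%N) :
  (P [set w | (\sum_(0 <= i < k) X i w / lam i <= t)%R /\
              (\sum_(0 <= i < m) X i w / lam i
               + \sum_(k <= i < 2 * k - m) X i w / lam i <= t)%R]
   <= ((expR 1 * t) ^+ (2 * k - m)
       / ((k - m)%:R ^+ (2 * k - 2 * m) * m%:R ^+ m)
       * \prod_(0 <= i < 2 * k - m) lam i)%:E)%E.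
Proof.
case: (ltP 0 t) => [tpos|t0']; first exact: main_pos.
have t0 : t = 0 by apply/eqP; rewrite eq_le t0' ht.
subst t.
set n := (2 * k - m)%N.
have n0 : (0 < n)%N by rewrite /n; lia.
rewrite mulr0 expr0n /= gtn_eqF // !mul0r.
pose Ev (u : R) := [set w | (\sum_(0 <= i < k) X i w / lam i <= u)%R /\
              (\sum_(0 <= i < m) X i w / lam i
               + \sum_(k <= i < n) X i w / lam i <= u)%R].
have mEv : forall u, measurable (Ev u).
  move=> u; apply: measurableI; apply: pre_meas; first exact: meas_sum.
  by apply: measurable_realfun.measurable_funD; exact: meas_sum.
change (P (Ev 0%R) <= (0%R)%:E)%E.
set C := expR 1 ^+ n / ((k - m)%:R ^+ (2 * k - 2 * m) * m%:R ^+ m) * \prod_(0 <= i < n) lam i.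
have C0 : 0 <= C.
  rewrite /C mulr_ge0 // ?divr_ge0 ?exprn_ge0 ?mulr_ge0 ?exprn_ge0 ?expR_ge0 ?ler0n //.
  by apply: prodr_ge0 => i _; exact: ltW.
have hu : forall u, 0 < u -> (P (Ev 0%R) <= (C * u ^+ n)%:E)%E.
  move=> u u0.
  have hm := @main_pos _ _ _ _ _ _ hind hexp hlam u u0 k m hmk.
  apply: le_trans (le_trans _ hm) _.
    apply: le_measure.
    - by rewrite inE; exact: mEv.
    - by rewrite inE; exact: (mEv u).
    - move=> w [h1 h2]; split; [exact: le_trans h1 (ltW u0)|exact: le_trans h2 (ltW u0)].
  rewrite lee_fin /C exprMn.
  by rewrite le_eqVlt; apply/orP; left; apply/eqP; ring.
have P0 : (0 <= P (Ev 0%R))%E by [].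
have hP : P (Ev 0%R) = (fine (P (Ev 0%R)))%:E.
  rewrite fineK // ge0_fin_numE //.
  exact: le_lt_trans (probability_le1 _ (mEv 0%R)) (ltry _).
rewrite hP lee_fin leNgt; apply/negP => p0.
set p := fine (P (Ev 0%R)) in hP p0.
have p1 : p <= 1 by rewrite -lee_fin -hP; exact: probability_le1.
pose u := p / (C + 1).
have u0 : 0 < u by rewrite divr_gt0 // ltr_wpDl.
have u1 : u <= 1 by rewrite ler_pdivrMr ?ltr_wpDl // mul1r; lra.
have := hu u u0; rewrite hP lee_fin => h.
have : C * u ^+ n <= C * u by rewrite ler_wpM2l // ler_iXnr // ltW.
have : C * u < p.
  rewrite /u mulrA ltr_pdivrMr ?ltr_wpDl //; nra.
lra.
Qed.
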